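(* Let $s,s'\in\mathbb C$, $f\in C_c^{\mathrm{lc}}(G/M)$ and $\gamma\in G$, and set $f_\gamma(gM)=f(\gamma^{-1}gM)$. Then for all $g\in G$, with $(\omega_1,\omega_2)=(g\omega_+,g\omega_-)$, $$(\mathcal R_{s,s'}f_\gamma)(\omega_1,\omega_2)=q^{(\frac12+is)\langle\gamma o,\omega_1\rangle}q^{(\frac12-i\overline{s'})\langle\gamma o,\omega_2\rangle}(\mathcal R_{s,s'}f)(\gamma^{-1}\omega_1,\gamma^{-1}\omega_2),$$ i.e. $(\mathcal R_{s,s'}f_\gamma)(gM\langle\tau\rangle)=q^{(\frac12+is)\langle\gamma o,g\omega_+\rangle}q^{(\frac12-i\overline{s'})\langle\gamma o,g\omega_-\rangle}(\mathcal R_{s,s'}f)(\gamma^{-1}gM\langle\tau\rangle)$.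
   Context: Let $q\ge2$, $\mathfrak G$ the $(q+1)$-regular tree with vertex set $\mathfrak X$, graph distance $d$, boundary $\Omega$ (infinite non-backtracking edge chains modulo eventual equality up to shift). Fix a vertex $o$ and $\omega_-\ne\omega_+$ with $o$ on the geodesic $]\omega_-,\omega_+[$; $\langle x,\omega\rangle=d(o,y)-d(x,y)$ where $[o,\omega)\cap[x,\omega)=[y,\omega)$. $G=\mathrm{Aut}(\mathfrak G)$, $K=\mathrm{Stab}_G(o)$, $B_{\omega_+}=\{g:g\omega_+=\omega_+,\ g\text{ fixes a vertex}\}$, $\tau\in G$ fixes $\omega_\pm$ and translates $]\omega_-,\omega_+[$ one step towards $\omega_+$; $g=kn\tau^j$ ($k\in K,n\in B_{\omega_+}$) with unique $j=:H(g)$. $r\in K$ with $r^2=\mathrm{id}$, $r\tau^jr^{-1}=\tau^{-j}$. $M=\{\gamma\in K:\gamma$ fixes $]\omega_-,\omega_+[$ pointwise$\}$. $G/M\cong\{(\omega,\omega',x):\omega\ne\omega',x\in]\omega,\omega'[\}$ via $gM\mapsto(g\omega_-,g\omega_+,go)$; $C_c^{\mathrm{lc}}(G/M)$ = locally constant compactly supported functions. With $d_{s,s'}(gM)=q^{(\frac12+is)H(g)}q^{(\frac12+is')H(gr)}$, the weighted Radon transform is $(\mathcal R_{s,s'}f)(gM\langle\tau\rangle)=\sum_{j\in\mathbb Z}f(g\tau^jM)d_{s,-\overline{s'}}(g\tau^jM)$; it is regarded as a function on pairs of distinct boundary points via $gM\langle\tau\rangle\leftrightarrow(g\omega_+,g\omega_-)$.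 *)

(* Defs.v *)
From Stdlib Require Import ClassicalEpsilon.
From mathcomp Require Import all_boot all_order all_algebra.
From mathcomp Require Import all_classical all_reals all_analysis.
From mathcomp Require Export complex.
Set Implicit Arguments. Unset Strict Implicit. Unset Printing Implicit Defensive.
Import GRing.Theory Num.Theory.
Local Open Scope ring_scope.

Section Graph.
Variables (X : Type) (adj : X -> X -> Prop).

Definition walk_len (x y : X) (n : nat) : Prop :=
  exists p : nat -> X, p 0%N = x /\ p n = y /\
    (forall i, (i < n)%N -> adj (p i) (p i.+1)).

Definition dist (x y : X) : nat :=
  epsilon (inhabits 0%N)
    (fun n => walk_len x y n /\ forall m, walk_len x y m -> (n <= m)%N).

Definition is_regular_tree (q : nat) : Prop :=
  (forall x y, adj x y -> adj y x) /\
  (forall x, ~ adj x x) /\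
  (forall x y, exists n, walk_len x y n) /\
  (forall (n : nat) (p : nat -> X), (3 <= n)%N -> p 0%N = p n ->
      (forall i, (i < n)%N -> adj (p i) (p i.+1)) ->
      ~ (forall i j, (i < j)%N -> (j < n)%N -> p i <> p j)) /\
  (forall x, exists e : 'I_q.+1 -> X,
      injective e /\ forall y, adj x y <-> exists i, e i = y).

Definition is_ray (w : nat -> X) : Prop :=
  forall n, adj (w n) (w n.+1) /\ w n.+2 <> w n.

(* equality up to shift (eventual equality): the relation defining boundary
   points; a boundary point is represented by any ray in its class *)
Definition ray_equiv (w w' : nat -> X) : Prop :=
  exists k m : nat, forall n, w (n + k)%N = w' (n + m)%N.

Definition is_line (l : int -> X) : Prop :=
  forall n : int, adj (l n) (l (n + 1)) /\ l (n + 2) <> l n.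

Definition ray_from (x : X) (omega : nat -> X) (w : nat -> X) : Prop :=
  is_ray w /\ w 0%N = x /\ ray_equiv w omega.

Definition is_horo (o x : X) (omega : nat -> X) (b : int) : Prop :=
  exists (y : X) (wo wx wy : nat -> X),
    ray_from o omega wo /\ ray_from x omega wx /\ ray_from y omega wy /\
    (forall z, ((exists n, wo n = z) /\ (exists n, wx n = z))
               <-> exists n, wy n = z) /\
    b = (dist o y)%:Z - (dist x y)%:Z.

Definition horo (o x : X) (omega : nat -> X) : int :=
  epsilon (inhabits 0) (is_horo o x omega).

Record aut := Aut {
  afun : X -> X;
  ainv : X -> X;
  afunK : cancel afun ainv;
  ainvK : cancel ainv afun;
  afun_adj : forall x y, adj (afun x) (afun y) <-> adj x y }.

Lemma ainv_adj (g : aut) x y : adj (ainv g x) (ainv g y) <-> adj x y.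
Proof. by rewrite -(afun_adj g) !ainvK. Qed.

Definition aut_id : aut :=
  @Aut id id (fun _ => erefl) (fun _ => erefl) (fun _ _ => iff_refl _).

Definition aut_mul (g h : aut) : aut.
Proof.
refine (@Aut (afun g \o afun h) (ainv h \o ainv g) _ _ _).
- by move=> x /=; rewrite afunK afunK.
- by move=> x /=; rewrite ainvK ainvK.
- by move=> x y /=; rewrite afun_adj afun_adj.
Defined.

Definition aut_inv (g : aut) : aut.
Proof.
refine (@Aut (ainv g) (afun g) (@ainvK g) (@afunK g) _).
exact: ainv_adj.
Defined.

Definition aut_pow (g : aut) (j : int) : aut :=
  match j with
  | Posz n => iter n (aut_mul g) aut_id
  | Negz n => iter n.+1 (aut_mul (aut_inv g)) aut_id
  end.

Definition aut_eq (g h : aut) : Prop := forall x, afun g x = afun h x.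

End Graph.

(* Data attached to the geodesic l = ]omega_-, omega_+[ with l 0 = o.         *)
Section Iwasawa.
Variables (X : Type) (adj : X -> X -> Prop) (l : int -> X) (tau : aut adj).

Definition base_o : X := l 0.
Definition omega_plus : nat -> X := fun n => l n%:Z.
Definition omega_minus : nat -> X := fun n => l (- n%:Z).

Definition g_omega_plus (g : aut adj) : nat -> X := afun g \o omega_plus.
Definition g_omega_minus (g : aut adj) : nat -> X := afun g \o omega_minus.

Definition inK (k : aut adj) : Prop := afun k base_o = base_o.

Definition inB (n : aut adj) : Prop :=
  ray_equiv (afun n \o omega_plus) omega_plus /\ exists v, afun n v = v.

Definition inM (m : aut adj) : Prop := inK m /\ forall j, afun m (l j) = l j.

Definition Hiw (g : aut adj) : int :=
  epsilon (inhabits 0) (fun j => exists k n, inK k /\ inB n /\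
     aut_eq g (aut_mul k (aut_mul n (aut_pow tau j)))).

End Iwasawa.

Section Radon.
Variable R : realType.
Local Open Scope complex_scope.

(* q^z = exp(z ln q) for z : R[i] *)
Definition qpow (q : nat) (z : R[i]) : R[i] :=
  let L := ln (q%:R : R) in
  (expR (complex.Re z * L))%:C * ((cos (complex.Im z * L)) +i* (sin (complex.Im z * L))).

(* sum over Z of a (finitely supported) family: the eventual value of the
   symmetric partial sums \sum_{-n <= j <= n} F j *)
Definition zsum (F : int -> R[i]) : R[i] :=
  epsilon (inhabits 0) (fun c => exists N : nat, forall n : nat, (N <= n)%N ->
     \sum_(i < (n.*2).+1) F (i%:Z - n%:Z) = c).

Variables (X : Type) (adj : X -> X -> Prop) (q : nat) (l : int -> X)
          (tau r : aut adj).

Definition dweight (s s' : R[i]) (g : aut adj) : R[i] :=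
  qpow q ((2^-1 + 'i * s) * (Hiw l tau g)%:~R) *
  qpow q ((2^-1 + 'i * s') * (Hiw l tau (aut_mul g r))%:~R).

(* (R_{s,s'} f)(gM<tau>) = sum_j f(g tau^j M) d_{s,-conj s'}(g tau^j M);
   functions on G/M are right-M-invariant functions on G *)
Definition radon (s s' : R[i]) (f : aut adj -> R[i]) (g : aut adj) : R[i] :=
  zsum (fun j => f (aut_mul g (aut_pow tau j)) *
                 dweight s (- s'^*) (aut_mul g (aut_pow tau j))).

End Radon.

Definition right_M_invariant (R : realType) (X : Type) (adj : X -> X -> Prop)
  (l : int -> X) (f : aut adj -> R[i]) : Prop :=
  forall g m, inM l m -> f (aut_mul g m) = f g.

(* locally constant (for the topology of pointwise convergence on G,
   equivalently on the quotient G/M) *)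
Definition locally_constant (R : realType) (X : Type) (adj : X -> X -> Prop)
  (f : aut adj -> R[i]) : Prop :=
  forall g, exists F : list X, forall h,
    (forall v, List.In v F -> afun h v = afun g v) -> f h = f g.

(* compactly supported on G/M: the support lies over finitely many vertices
   g o (the sets {g : g o in S}, S finite, are the compact open subsets
   exhausting G, and M is compact) *)
Definition compact_support (R : realType) (X : Type) (adj : X -> X -> Prop)
  (o : X) (f : aut adj -> R[i]) : Prop :=
  exists S : list X, forall g, f g <> 0 -> List.In (afun g o) S.

(* Main.v *)
Require Import Defs.
From mathcomp Require Import all_boot all_order all_algebra fingroup perm zify ring.
From mathcomp Require Import all_classical all_reals all_analysis.
From mathcomp Require Import complex.
From Stdlib Require Import ClassicalEpsilon.
Set Implicit Arguments. Unset Strict Implicit. Unset Printing Implicit Defensive.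

Section Tree.
Variables (X : Type) (adj : X -> X -> Prop) (q : nat).
Hypothesis Htree : is_regular_tree adj q.

Lemma adj_sym x y : adj x y -> adj y x. Proof. by case: Htree => H _; apply: H. Qed.
Lemma adj_irr x : ~ adj x x. Proof. by case: Htree => _ [H _]; apply: H. Qed.

Definition Wk (p : nat -> X) n := forall i, i < n -> adj (p i) (p i.+1).
Definition NB (p : nat -> X) n := Wk p n /\ forall i, i.+2 <= n -> p i.+2 <> p i.

Lemma NB_inj_aux p n : NB p n -> forall d i, 0 < d -> i + d <= n -> p i <> p (i + d).
Proof.
move=> [Hw Hnb] d; elim/ltn_ind: d => d IH i d0 Hid Heq.
case: Htree => _ [Hirr [_ [Hcyc _]]].
have : (d = 1 \/ d = 2 \/ 3 <= d) by lia.
case=> [d1|[d2|d3]].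
- subst d; apply: (Hirr (p i)); rewrite {2}Heq addn1; apply: Hw; lia.
- subst d; apply: (Hnb i); first lia. by rewrite Heq addn2.
- apply: (Hcyc d (fun k => p (i + k)) d3).
  + by rewrite addn0.
  + move=> k Hk /=; rewrite addnS; apply: Hw; lia.
  + move=> a b Hab Hb Habeq; apply: (IH (b - a) _ (i + a)).
    * lia.
    * lia.
    * lia.
    * by rewrite Habeq; congr p; lia.
Qed.

Lemma NB_inj p n i j : NB p n -> i <= n -> j <= n -> p i = p j -> i = j.
Proof.
move=> H Hi Hj Heq; have : (i = j \/ i < j \/ j < i) by lia.
case=> [//|[ij|ji]].
- exfalso; apply: (NB_inj_aux H (d := j - i) (i := i)); try lia.
  by rewrite Heq; congr p; lia.
- exfalso; apply: (NB_inj_aux H (d := i - j) (i := j)); try lia.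
  by rewrite -Heq; congr p; lia.
Qed.

Lemma NB_uniq n : forall n' p p', NB p n -> NB p' n' -> p 0 = p' 0 -> p n = p' n' ->
  n = n' /\ forall i, i <= n -> p i = p' i.
Proof.
elim: n => [|n IH] n' p p' Hp Hp' H0 Hn.
- have nn : 0 = n' by apply: (NB_inj Hp' (i := 0) (j := n')) => //; rewrite -H0.
  by split=> // i; rewrite leqn0 => /eqP ->.
- case: n' Hp' Hn => [|n'] Hp' Hn.
  + have : 0 = n.+1 by apply: (NB_inj Hp (i := 0) (j := n.+1)) => //; rewrite Hn.
    by [].
  + case: (classic (p n = p' n')) => Hlast.
    * have [Hw Hb] := Hp; have [Hw' Hb'] := Hp'.
      have [] := IH n' p p'.
      -- split; first by move=> i Hi; apply: Hw; lia.
         move=> i Hi; apply: Hb; lia.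
      -- split; first by move=> i Hi; apply: Hw'; lia.
         move=> i Hi; apply: Hb'; lia.
      -- done.
      -- done.
      -- move=> enn Hag; split; first by rewrite enn.
         move=> i Hi.
         have : (i <= n \/ i = n.+1) by lia.
         case=> [h|->]; first exact: Hag.
         by rewrite Hn enn.
    * exfalso.
      have [Hw Hb] := Hp; have [Hw' Hb'] := Hp'.
      pose c k := if k <= n.+1 then p k else p' (n.+1 + n'.+1 - k).
      have Hc : NB c (n.+1 + n'.+1).
        split.
        - move=> i Hi; rewrite /c.
          have : (i.+1 <= n.+1 \/ i = n.+1 \/ n.+1 < i) by lia.
          case=> [h|[h|h]].
          + have -> : (i <= n.+1) = true by lia.
            rewrite h; apply: Hw; lia.
          + subst i; rewrite leqnn ltnn Hn.
            have -> : n.+1 + n'.+1 - n.+2 = n' by lia.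
            apply: adj_sym; apply: Hw'; lia.
          + have -> : (i <= n.+1) = false by lia.
            have -> : (i.+1 <= n.+1) = false by lia.
            have -> : n.+1 + n'.+1 - i = (n.+1 + n'.+1 - i.+1).+1 by lia.
            apply: adj_sym; apply: Hw'; lia.
        - move=> i Hi; rewrite /c.
          have : (i.+2 <= n.+1 \/ i = n \/ i = n.+1 \/ n.+1 < i) by lia.
          case=> [h|[h|[h|h]]].
          + have -> : (i <= n.+1) = true by lia.
            rewrite h; apply: Hb; lia.
          + subst i; rewrite ltnn.
            have -> : (n <= n.+1) = true by lia.
            have -> : n.+1 + n'.+1 - n.+2 = n' by lia.
            by move=> e; apply: Hlast; rewrite e.
          + subst i; rewrite leqnn.
            have -> : (n.+3 <= n.+1) = false by lia.
            have -> : n.+1 + n'.+1 - n.+3 = n'.-1 by lia.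
            rewrite Hn; have h2 : n'.-1.+2 = n'.+1 by lia.
            have := Hb' n'.-1; rewrite h2 => H e; apply: H; [lia|by rewrite e].
          + have -> : (i <= n.+1) = false by lia.
            have -> : (i.+2 <= n.+1) = false by lia.
            have -> : n.+1 + n'.+1 - i = (n.+1 + n'.+1 - i.+2).+2 by lia.
            move=> e; apply: (Hb' (n.+1 + n'.+1 - i.+2)); [lia|by rewrite e].
      have := NB_inj Hc (i := 0) (j := n.+1 + n'.+1) (leq0n _) (leqnn _).
      rewrite /c /= subnn => H.
      have h3 : (n.+1 + n'.+1 <= n.+1) = false by lia.
      rewrite h3 in H; have := H H0; lia.
Qed.

Lemma ex_min_nat (P : nat -> Prop) : (exists n, P n) -> exists n, P n /\ forall m, P m -> n <= m.
Proof.
move=> [N HN]; elim/ltn_ind: N HN => N IH HN.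
case: (classic (exists m, m < N /\ P m)) => [[m [Hm Pm]]|Hno]; first exact: IH Pm.
exists N; split=> // m Pm; case: (leqP N m) => // Hm; exfalso; apply: Hno; by exists m.
Qed.

Lemma dist_spec x y : walk_len adj x y (dist adj x y) /\
  forall m, walk_len adj x y m -> dist adj x y <= m.
Proof.
have : exists n, walk_len adj x y n /\ forall m, walk_len adj x y m -> n <= m.
  apply: ex_min_nat; case: Htree => _ [_ [Hc _]]; exact: Hc.
move/(epsilon_spec (inhabits 0%N)); exact.
Qed.

Lemma minwalk x y : exists p, NB p (dist adj x y) /\ p 0 = x /\ p (dist adj x y) = y.
Proof.
have [[p [p0 [pd pw]]] Hmin] := dist_spec x y.
move: pd pw Hmin; set d := dist adj x y => pd pw Hmin.
exists p; split=> //; split=> // i Hi Heq.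
pose p' k := if k <= i then p k else p k.+2.
have : d <= d - 2.
  apply: Hmin; exists p'; rewrite /p' /=; split=> //; split.
  - have -> : (d - 2 <= i) = (d == i.+2) by lia.
    case: eqP => [hd|Hne] /=.
    + rewrite -pd hd Heq; congr p; lia.
    + rewrite -pd; congr p; lia.
  - move=> k Hk /=; case: (ltngtP k i) => h.
    + apply: pw; lia.
    + apply: pw; lia.
    + rewrite h -Heq; apply: pw; lia.
lia.
Qed.

Lemma dist_NB p n : NB p n -> dist adj (p 0) (p n) = n.
Proof.
move=> Hp; have [p' [Hp' [p0 pn]]] := minwalk (p 0) (p n).
have [] := NB_uniq Hp' Hp => //.
Qed.

Lemma dist_le x y n : walk_len adj x y n -> dist adj x y <= n.
Proof. by have [_ H] := dist_spec x y; apply: H. Qed.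

Lemma NB_map (g : aut adj) p n : NB p n -> NB (afun g \o p) n.
Proof.
move=> [Hw Hb]; split=> i Hi /=; first by apply/afun_adj; apply: Hw.
move=> e; apply: (Hb i Hi); exact: (can_inj (@afunK _ _ g)).
Qed.

Lemma dist_aut (g : aut adj) x y : dist adj (afun g x) (afun g y) = dist adj x y.
Proof.
have [p [Hp [p0 pn]]] := minwalk x y.
have := dist_NB (NB_map g Hp); by rewrite /= p0 pn.
Qed.

Lemma NB_shift p n k : NB p (n + k) -> NB (fun i => p (i + k)) n.
Proof.
move=> [Hw Hb]; split=> i Hi /=; first by rewrite addSn; apply: Hw; lia.
rewrite !addSn; apply: Hb; lia.
Qed.

Lemma NB_le p n m : NB p n -> m <= n -> NB p m.
Proof. move=> [Hw Hb] h; split=> i Hi; [apply: Hw|apply: Hb]; lia. Qed.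

Lemma ray_NB w n : is_ray adj w -> NB w n.
Proof. move=> Hw; split=> i _; [exact: (Hw i).1 | exact: (Hw i).2]. Qed.

Lemma ray_shift w k : is_ray adj w -> is_ray adj (fun i => w (i + k)).
Proof. by move=> Hw n /=; rewrite !addSn; apply: Hw. Qed.

Lemma dist_ray w i : is_ray adj w -> dist adj (w 0) (w i) = i.
Proof. move=> Hw; exact: dist_NB (ray_NB i Hw). Qed.

Lemma dist_ray2 w i j : is_ray adj w -> i <= j -> dist adj (w i) (w j) = j - i.
Proof.
move=> Hw h; have := dist_ray (j - i) (ray_shift i Hw).
by rewrite add0n subnK.
Qed.

Lemma req_refl (w : nat -> X) : ray_equiv w w. Proof. by exists 0, 0. Qed.
Lemma req_sym (w w' : nat -> X) : ray_equiv w w' -> ray_equiv w' w.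
Proof. by move=> [k [m H]]; exists m, k => n; rewrite H. Qed.
Lemma req_trans (w1 w2 w3 : nat -> X) : ray_equiv w1 w2 -> ray_equiv w2 w3 -> ray_equiv w1 w3.
Proof.
move=> [k1 [m1 H1]] [k2 [m2 H2]]; exists (k1 + k2), (m1 + m2) => n.
have -> : n + (k1 + k2) = (n + k2) + k1 by lia.
rewrite H1; have -> : n + k2 + m1 = (n + m1) + k2 by lia.
by rewrite H2; congr w3; lia.
Qed.
Lemma req_shift (w : nat -> X) k : ray_equiv (fun i => w (i + k)) w.
Proof. by exists 0, k => n; rewrite addn0. Qed.

Lemma ray_uniq w w' : is_ray adj w -> is_ray adj w' -> w 0 = w' 0 -> ray_equiv w w' ->
  forall i, w i = w' i.
Proof.
move=> Hw Hw' H0 [k [m Hkm]].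
have [ekm Hag] := NB_uniq (ray_NB k Hw) (ray_NB m Hw') H0 (Hkm 0).
subst m => i; case: (leqP i k) => h; first exact: Hag.
have := Hkm (i - k); by rewrite subnK // ltnW.
Qed.

Lemma ray_exists w x : is_ray adj w -> exists w', ray_from adj x w w'.
Proof.
move=> Hw.
have [v [[N HN] Hmin]] := ex_min_nat (ex_intro (fun v => exists N, dist adj x (w N) = v) _ (ex_intro _ 0 erefl)).
subst v.
have [p [Hp [p0 pd]]] := minwalk x (w N).
set d := dist adj x (w N) in Hp pd Hmin.
exists (fun i => if i <= d then p i else w (N + i - d)); split; last split.
- have [Hpw Hpb] := Hp.
  move=> i; split.
  + have : (i < d \/ d < i \/ i = d) by lia.
    case=> [h|[h|h]].
    * have -> : (i <= d) = true by lia. have -> : (i.+1 <= d) = true by lia. apply: Hpw; lia.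
    * have -> : (i <= d) = false by lia. have -> : (i.+1 <= d) = false by lia.
      have -> : N + i.+1 - d = (N + i - d).+1 by lia. exact: (Hw _).1.
    * subst i; rewrite leqnn; have -> : (d.+1 <= d) = false by lia.
      rewrite pd; have -> : N + d.+1 - d = N.+1 by lia. exact: (Hw _).1.
  + have : (i.+2 <= d \/ i.+1 = d \/ d <= i) by lia.
    case=> [h|[h|h]].
    * have -> : (i <= d) = true by lia. rewrite h. apply: Hpb; lia.
    * have -> : (i <= d) = true by lia. have -> : (i.+2 <= d) = false by lia.
      have -> : N + i.+2 - d = N.+1 by lia.
      move=> e.
      have : dist adj x (w N.+1) <= i.
        apply: dist_le; exists p; split=> //; split; first by rewrite e.
        move=> j hj; have [Hpw' _] := Hp; apply: Hpw'; lia.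
      have := Hmin _ (ex_intro _ N.+1 erefl); lia.
    * have -> : (i.+2 <= d) = false by lia.
      case: (eqVneq i d) => [->|hne].
      -- rewrite leqnn pd; have -> : N + d.+2 - d = N.+2 by lia. exact: (Hw _).2.
      -- have -> : (i <= d) = false by lia.
         have -> : N + i.+2 - d = (N + i - d).+2 by lia. exact: (Hw _).2.
- by rewrite /= p0.
- exists d, N => n; have : (n + d <= d) = (n == 0) by lia.
  case: eqP => [->|hn] ->; first by rewrite add0n pd.
  congr w; lia.
Qed.

Lemma is_horo_ev (w : nat -> X) a x b : is_ray adj w -> is_horo adj a x w b ->
  exists N0, forall N, N0 <= N -> b = ((dist adj a (w N))%:Z - (dist adj x (w N))%:Z)%R.
Proof.
move=> Hw [y [wo [wx [wy [[Hwo [wo0 ewo]] [[Hwx [wx0 ewx]] [[Hwy [wy0 ewy]] [Hint ->]]]]]]]].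
have [[t wot] [t' wxt]] : (exists t, wo t = y) /\ (exists t', wx t' = y).
  by apply/Hint; exists 0.
have Eo : forall i, wo (i + t) = wy i.
  apply: (@ray_uniq (fun i => wo (i + t)) wy); [exact: ray_shift|done|by rewrite add0n wot|].
  apply: req_trans (req_shift _ _) _; apply: req_trans ewo _; exact: req_sym.
have Ex : forall i, wx (i + t') = wy i.
  apply: (@ray_uniq (fun i => wx (i + t')) wy); [exact: ray_shift|done|by rewrite add0n wxt|].
  apply: req_trans (req_shift _ _) _; apply: req_trans ewx _; exact: req_sym.
have [k [m Hkm]] := ewy.
exists m => N hN.
have eN : w N = wy (N - m + k) by rewrite Hkm subnK.
have h1 : dist adj a (wy (N - m + k)) = N - m + k + t by rewrite -Eo -wo0 dist_ray.
have h2 : dist adj x (wy (N - m + k)) = N - m + k + t' by rewrite -Ex -wx0 dist_ray.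
have h3 : dist adj a y = t by rewrite -wot -wo0 dist_ray.
have h4 : dist adj x y = t' by rewrite -wxt -wx0 dist_ray.
rewrite eN h1 h2 h3 h4; lia.
Qed.

Lemma is_horo_ex (w : nat -> X) a x : is_ray adj w -> exists b, is_horo adj a x w b.
Proof.
move=> Hw.
have [wo [Hwo [wo0 ewo]]] := ray_exists a Hw.
have [wx [Hwx [wx0 ewx]]] := ray_exists x Hw.
have [k [m Hkm]] : ray_equiv wo wx by apply: req_trans ewo _; exact: req_sym.
have k0 : wo k = wx m by have := Hkm 0; rewrite !add0n.
have [t [[t' Htt'] Hmin]] := ex_min_nat (ex_intro (fun t => exists t', wo t = wx t') k (ex_intro _ m k0)).
have Eq : forall i, wx (i + t') = wo (i + t).
  apply: (@ray_uniq (fun i => wx (i + t')) (fun i => wo (i + t))); [exact: ray_shift|exact: ray_shift|by rewrite !add0n|].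
  apply: req_trans (req_shift _ _) _; apply: req_trans ewx _.
  apply: req_sym; apply: req_trans (req_shift _ _) _; exact: ewo.
exists ((dist adj a (wo t))%:Z - (dist adj x (wo t))%:Z)%R.
exists (wo t), wo, wx, (fun i => wo (i + t)).
split; first by [].
split; first by [].
split; first by split; [exact: ray_shift|split; [by rewrite add0n|apply: req_trans (req_shift _ _) ewo]].
split=> // z; split.
- move=> [[s ws] [s' ws']]; exists (s - t).
  have : t <= s by apply: Hmin; exists s'; rewrite ws ws'.
  by move=> h; rewrite subnK.
- move=> [n <-]; split; first by exists (n + t).
  by exists (n + t'); rewrite Eq.
Qed.

Lemma horo_ev (w : nat -> X) a x : is_ray adj w ->
  exists N0, forall N, N0 <= N -> horo adj a x w = ((dist adj a (w N))%:Z - (dist adj x (w N))%:Z)%R.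
Proof.
move=> Hw; apply: is_horo_ev => //.
rewrite /horo; exact: (epsilon_spec (inhabits 0%R) _ (is_horo_ex a x Hw)).
Qed.

Lemma horo_req (w w' : nat -> X) a x : is_ray adj w -> is_ray adj w' -> ray_equiv w w' ->
  horo adj a x w = horo adj a x w'.
Proof.
move=> Hw Hw' [k [m Hkm]].
have [N0 H0] := horo_ev a x Hw; have [N1 H1] := horo_ev a x Hw'.
rewrite (H0 (N0 + N1 + k)) ?(H1 (N0 + N1 + m)); try lia.
by rewrite Hkm.
Qed.

Lemma is_ray_aut (g : aut adj) w : is_ray adj w -> is_ray adj (afun g \o w).
Proof.
move=> Hw n; have [H1 H2] := Hw n; split => /=; first by apply/afun_adj.
by move=> e; apply: H2; exact: (can_inj (@afunK _ _ g)).
Qed.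

Lemma horo_aut (g : aut adj) (w : nat -> X) a x : is_ray adj w ->
  horo adj (afun g a) (afun g x) (afun g \o w) = horo adj a x w.
Proof.
move=> Hw.
have [N0 H0] := horo_ev a x Hw; have [N1 H1] := horo_ev (afun g a) (afun g x) (is_ray_aut g Hw).
rewrite (H0 (N0 + N1)) ?(H1 (N0 + N1)); try lia.
by rewrite /= !dist_aut.
Qed.

Lemma horo_cocycle (w : nat -> X) a b x : is_ray adj w ->
  horo adj a x w = (horo adj a b w + horo adj b x w)%R.
Proof.
move=> Hw.
have [N0 H0] := horo_ev a x Hw; have [N1 H1] := horo_ev a b Hw; have [N2 H2] := horo_ev b x Hw.
rewrite (H0 (N0 + N1 + N2)) ?(H1 (N0 + N1 + N2)) ?(H2 (N0 + N1 + N2)); try lia.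
Qed.

Section Construct.
Variable (o : X) (r1 r2 : nat -> X).
Hypotheses (Hr1 : is_ray adj r1) (Hr2 : is_ray adj r2) (r10 : r1 0 = o) (r20 : r2 0 = o).

Let d x := dist adj o x.
Definition pth x : nat -> X :=
  epsilon (inhabits (fun _ => o)) (fun p => NB p (d x) /\ p 0 = o /\ p (d x) = x).

Lemma pth_spec x : NB (pth x) (d x) /\ pth x 0 = o /\ pth x (d x) = x.
Proof. have := minwalk o x; move/(epsilon_spec (inhabits (fun _ => o))); exact. Qed.

Lemma pth_prefix p n : NB p n -> p 0 = o -> d (p n) = n /\ forall i, i <= n -> pth (p n) i = p i.
Proof.
move=> Hp p0; have dn : d (p n) = n by rewrite /d -{1}p0 dist_NB.
split=> //; have [H1 [H2 H3]] := pth_spec (p n).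
rewrite dn in H1 H3.
have e0 : pth (p n) 0 = p 0 by rewrite H2.
have en : pth (p n) n = p n by rewrite H3.
have [_ H] := NB_uniq H1 Hp e0 en.
by move=> i hi; apply: H.
Qed.

Lemma pth_pref2 x i : i <= d x -> d (pth x i) = i /\ forall j, j <= i -> pth (pth x i) j = pth x j.
Proof.
move=> h; have [H1 [H2 H3]] := pth_spec x; apply: pth_prefix => //; exact: NB_le H1 h.
Qed.

Lemma d0 x : d x = 0 -> x = o.
Proof. move=> h; have [_ [H2 H3]] := pth_spec x; by rewrite -H3 h. Qed.

Lemma d_o : d o = 0.
Proof.
have := @pth_prefix (fun _ => o) 0; rewrite /= => H; apply: (H _ erefl).1.
by split=> i hi.
Qed.

Definition par x := pth x (d x).-1.

Definition en x : 'I_q.+1 -> X :=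
  epsilon (inhabits (fun _ => x)) (fun e => injective e /\ forall y, adj x y <-> exists i, e i = y).

Lemma en_spec x : injective (en x) /\ forall y, adj x y <-> exists i, en x i = y.
Proof.
case: Htree => _ [_ [_ [_ H]]]; have := H x.
move/(epsilon_spec (inhabits (fun _ => x))); exact.
Qed.

Definition Good x y (s : X -> X) :=
  d x = d y ->
  [/\ forall z, adj x z -> adj y (s z),
      forall z z', adj x z -> adj x z' -> s z = s z' -> z = z',
      forall u, adj y u -> exists z, adj x z /\ s z = u,
      0 < d x -> s (par x) = par y &
      forall i, x = r1 i -> y = r2 i -> s (r1 i.+1) = r2 i.+1].

Lemma perm2 m (i1 i2 j1 j2 : 'I_m) : i1 != i2 -> j1 != j2 ->
  exists p : {perm 'I_m}, p i1 = j1 /\ p i2 = j2.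
Proof.
move=> h1 h2; pose c := tperm i1 j1 i2.
have cj1 : c != j1.
  rewrite /c -{2}(tpermL i1 j1); apply/eqP => /perm_inj e; by rewrite e eqxx in h1.
exists (tperm i1 j1 * tperm c j2)%g; rewrite !permM tpermL tpermL; split=> //.
by rewrite tpermD // eq_sym.
Qed.

Lemma mk_s x y (p : {perm 'I_q.+1}) :
  let s := fun z => en y (p (epsilon (inhabits ord0) (fun i => en x i = z))) in
  [/\ forall z, adj x z -> adj y (s z),
      forall z z', adj x z -> adj x z' -> s z = s z' -> z = z',
      forall u, adj y u -> exists z, adj x z /\ s z = u &
      forall i, s (en x i) = en y (p i)].
Proof.
move=> s; have [ix Hx] := en_spec x; have [iy Hy] := en_spec y.
have inv : forall i, epsilon (inhabits ord0) (fun j => en x j = en x i) = i.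
  move=> i; apply: ix; apply: (epsilon_spec (inhabits ord0) (fun j => en x j = en x i)).
  by exists i.
split.
- move=> z _; apply/Hy; by eexists.
- move=> z z' /Hx [i <-] /Hx [j <-]; rewrite /s !inv => /iy /perm_inj ->.
  done.
- move=> u /Hy [j <-]; exists (en x ((p^-1)%g j)); split; first by apply/Hx; eexists.
  by rewrite /s inv permKV.
- by move=> i; rewrite /s inv.
Qed.

Lemma dr1 i : d (r1 i) = i.
Proof. by rewrite /d -r10 dist_ray. Qed.
Lemma dr2 i : d (r2 i) = i.
Proof. by rewrite /d -r20 dist_ray. Qed.

Lemma par_r1 i : 0 < i -> par (r1 i) = r1 i.-1.
Proof.
move=> h; rewrite /par dr1; have [_ H] := pth_prefix (ray_NB i Hr1) r10.
by apply: H; lia.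
Qed.
Lemma par_r2 i : 0 < i -> par (r2 i) = r2 i.-1.
Proof.
move=> h; rewrite /par dr2; have [_ H] := pth_prefix (ray_NB i Hr2) r20.
by apply: H; lia.
Qed.

Lemma adj_par x : 0 < d x -> adj (par x) x.
Proof.
move=> h; have [[Hw _] [_ H3]] := pth_spec x.
rewrite /par; have := Hw (d x).-1; rewrite (ltn_predK h) H3; apply; lia.
Qed.

Lemma Good_ex x y : exists s, Good x y s.
Proof.
case: (classic (d x = d y)) => hd; last by exists id.
have [ix Hx] := en_spec x; have [iy Hy] := en_spec y.
have choose_perm : exists p : {perm 'I_q.+1},
    (0 < d x -> forall i j, en x i = par x -> en y j = par y -> p i = j) /\
    (forall k, x = r1 k -> y = r2 k -> forall i j, en x i = r1 k.+1 -> en y j = r2 k.+1 -> p i = j).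
  case: (classic (exists k, x = r1 k /\ y = r2 k)) => [[k [xk yk]]|hno].
  - have [i1 ei1] : exists i, en x i = r1 k.+1 by apply/Hx; rewrite xk; exact: (Hr1 k).1.
    have [j1 ej1] : exists j, en y j = r2 k.+1 by apply/Hy; rewrite yk; exact: (Hr2 k).1.
    have uk : forall k', x = r1 k' -> k' = k by move=> k' e; rewrite -(dr1 k') -e xk dr1.
    have uk' : forall k', y = r2 k' -> k' = k by move=> k' e; rewrite -(dr2 k') -e yk dr2.
    case: (posnP (d x)) => hx.
    + have [p pi1] : exists p : {perm 'I_q.+1}, p i1 = j1 by exists (tperm i1 j1); rewrite tpermL.
      exists p; split=> [//|].
      move=> k' /uk -> _ i j ei ej; have -> : i = i1 by apply: ix; rewrite ei ei1.
      have -> : j = j1 by apply: iy; rewrite ej ej1.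
      exact: pi1.
    + have [i2 ei2] : exists i, en x i = par x by apply/Hx; apply: adj_sym; exact: adj_par.
      have [j2 ej2] : exists j, en y j = par y by apply/Hy; apply: adj_sym; apply: adj_par; lia.
      have dk : d x = k by rewrite xk dr1.
      have [p [pi1 pi2]] : exists p : {perm 'I_q.+1}, p i1 = j1 /\ p i2 = j2.
        apply: perm2.
        * apply/eqP => e; move: ei2; rewrite -e ei1 xk par_r1; last lia.
          move=> e2; apply: (Hr1 k.-1).2; rewrite (_ : k.-1.+2 = k.+1) ?e2 //; lia.
        * apply/eqP => e; move: ej2; rewrite -e ej1 yk par_r2; last lia.
          move=> e2; apply: (Hr2 k.-1).2; rewrite (_ : k.-1.+2 = k.+1) ?e2 //; lia.
      exists p; split.
      * move=> _ i j ei ej; have -> : i = i2 by apply: ix; rewrite ei ei2.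
      have -> : j = j2 by apply: iy; rewrite ej ej2.
      exact: pi2.
      * move=> k' /uk -> _ i j ei ej; have -> : i = i1 by apply: ix; rewrite ei ei1.
      have -> : j = j1 by apply: iy; rewrite ej ej1.
      exact: pi1.
  - case: (posnP (d x)) => hx.
    + exists 1%g; split=> [//|].
      by move=> k xk yk; exfalso; apply: hno; exists k.
    + have [i2 ei2] : exists i, en x i = par x by apply/Hx; apply: adj_sym; exact: adj_par.
      have [j2 ej2] : exists j, en y j = par y by apply/Hy; apply: adj_sym; apply: adj_par; lia.
      exists (tperm i2 j2); split.
      * move=> _ i j ei ej; have -> : i = i2 by apply: ix; rewrite ei ei2.
      have -> : j = j2 by apply: iy; rewrite ej ej2.
      exact: tpermL.
      * by move=> k xk yk; exfalso; apply: hno; exists k.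
have [p [Pp Pr]] := choose_perm.
have [s1 s2 s3 s4] := mk_s x y p.
eexists => _; split.
- exact: s1.
- exact: s2.
- exact: s3.
- move=> hx; have [i ei] : exists i, en x i = par x by apply/Hx; apply: adj_sym; exact: adj_par.
  rewrite -ei s4; have [j ej] : exists j, en y j = par y by apply/Hy; apply: adj_sym; apply: adj_par; lia.
  by rewrite (Pp hx i j ei ej).
- move=> k xk yk; have [i ei] : exists i, en x i = r1 k.+1 by apply/Hx; rewrite xk; exact: (Hr1 k).1.
  have [j ej] : exists j, en y j = r2 k.+1 by apply/Hy; rewrite yk; exact: (Hr2 k).1.
  by rewrite -ei s4 (Pr k xk yk i j ei ej).
Qed.

Definition sig x y : X -> X := epsilon (inhabits id) (Good x y).
Lemma sigG x y : Good x y (sig x y).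
Proof. have := Good_ex x y; move/(epsilon_spec (inhabits id)); exact. Qed.


Fixpoint Yf (x : X) (i : nat) : X :=
  match i with 0 => o | i'.+1 => sig (pth x i') (Yf x i') (pth x i'.+1) end.

Definition phi x := Yf x (d x).

Lemma Y_NB x i : i <= d x -> NB (Yf x) i.
Proof.
elim: i => [|i IH] hi; first by split=> j hj.
have IHi := IH (ltnW hi).
have [[Pw Pb] [P0 Pd]] := pth_spec x.
have [dxi Hxi] := pth_pref2 (ltnW hi).
have [dyi Hyi] := pth_prefix IHi erefl.
have [g1 g2 g3 g4 g5] := @sigG (pth x i) (Yf x i) (etrans dxi (esym dyi)).
have aj : adj (pth x i) (pth x i.+1) by apply: Pw.
split.
- move=> j hj; case: (ltngtP j i) => h.
  + by apply: IHi.1.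
  + lia.
  + subst j => /=; exact: g1.
- move=> j hj; have : (j.+2 <= i \/ j.+1 = i) by lia.
  case=> [h|h]; first exact: IHi.2.
  subst i.
  change (sig (pth x j.+1) (Yf x j.+1) (pth x j.+2) <> Yf x j).
  have e1 : Yf x j = par (Yf x j.+1) by rewrite /par dyi /= Hyi.
  have e2 : par (pth x j.+1) = pth x j by rewrite /par dxi /= Hxi.
  rewrite e1 -g4; last by rewrite dxi.
  move=> e; have := g2 _ _ aj _ e; rewrite e2 => H.
  apply: (Pb j); first lia. apply: H.
  by apply: adj_sym; rewrite -e2; apply: adj_par; rewrite dxi.
Qed.

Lemma phi_d x : d (phi x) = d x /\ forall j, j <= d x -> pth (phi x) j = Yf x j.
Proof. exact: pth_prefix (Y_NB (leqnn _)) erefl. Qed.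

Lemma Y_ext x z n : (forall i, i <= n -> pth x i = pth z i) -> forall i, i <= n -> Yf x i = Yf z i.
Proof.
move=> H; elim=> [//|i IH] hi /=.
by rewrite IH ?H //; lia.
Qed.

Lemma Y_inj x z n : n <= d x -> n <= d z -> (forall i, i <= n -> Yf x i = Yf z i) ->
  forall i, i <= n -> pth x i = pth z i.
Proof.
move=> hx hz H; elim=> [|i IH] hi.
- have [_ [h0 _]] := pth_spec x; have [_ [h0' _]] := pth_spec z; by rewrite h0 h0'.
- have ci := IH (ltnW hi).
  have [dxi _] := pth_pref2 (leq_trans (ltnW hi) hx).
  have [dyi _] := pth_prefix (Y_NB (leq_trans (ltnW hi) hx)) erefl.
  have [g1 g2 g3 g4 g5] := @sigG (pth x i) (Yf x i) (etrans dxi (esym dyi)).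
  have [[Pw _] _] := pth_spec x; have [[Pw' _] _] := pth_spec z.
  apply: g2.
  + apply: Pw; lia.
  + rewrite ci; apply: Pw'; lia.
  + have := H i.+1 hi => /=; rewrite ci (H i) //; lia.
Qed.

Lemma child_split x z : adj x z ->
  (d z = (d x).+1 /\ forall i, i <= d x -> pth z i = pth x i) \/
  (d x = (d z).+1 /\ forall i, i <= d z -> pth x i = pth z i).
Proof.
move=> axz; have [[Pw Pb] [P0 Pd]] := pth_spec x.
case: (classic (0 < d x /\ z = par x)) => [[hx ->]|hno].
- right; have [h1 h2] := pth_pref2 (leq_pred (d x)).
  rewrite /par h1; split; first lia.
  by move=> i hi; rewrite h2.
- left; pose p' i := if i <= d x then pth x i else z.
  have Hp' : NB p' (d x).+1.
    split=> i hi; rewrite /p'.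
    + case: (ltngtP i (d x)) => h.
      * apply: Pw; lia.
      * lia.
      * by subst i; rewrite Pd.
    + have : (i.+2 <= d x \/ i.+1 = d x) by lia.
      case=> [h|h].
      * have -> : (i <= d x) = true by lia. rewrite h; apply: Pb; lia.
      * have -> : (i <= d x) = true by lia. have -> : (i.+2 <= d x) = false by lia.
        move=> e; apply: hno; split; first lia.
        by rewrite e /par -h.
  have p0 : p' 0 = o by rewrite /p' P0.
  have [h1 h2] := pth_prefix Hp' p0.
  have ez : p' (d x).+1 = z by rewrite /p' ltnn.
  rewrite ez in h1 h2; split=> // i hi; rewrite h2 ?/p' ?hi //; lia.
Qed.

Lemma phi_child x z : d z = (d x).+1 -> (forall i, i <= d x -> pth z i = pth x i) ->
  phi z = sig x (phi x) z.
Proof.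
move=> h1 h2; rewrite /phi h1 /= h2 //.
have [_ [_ Pd]] := pth_spec x; have [_ [_ Pdz]] := pth_spec z.
rewrite Pd (@Y_ext z x (d x)) // -?h1 ?Pdz //.
Qed.

Lemma phi_adj x z : adj x z -> adj (phi x) (phi z).
Proof.
move=> axz; case: (child_split axz) => [[h1 h2]|[h1 h2]].
- rewrite (phi_child h1 h2); have [dp _] := phi_d x.
  have [g1 _ _ _ _] := @sigG x (phi x) (esym dp); exact: g1.
- rewrite (phi_child h1 h2); have [dp _] := phi_d z.
  have [g1 _ _ _ _] := @sigG z (phi z) (esym dp); apply: adj_sym; apply: g1.
  exact: adj_sym.
Qed.

Lemma phi_adj_rev x z : adj (phi x) (phi z) -> adj x z.
Proof.
have key : forall x z, d (phi z) = (d (phi x)).+1 ->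
    (forall i, i <= d (phi x) -> pth (phi z) i = pth (phi x) i) -> adj x z.
  move=> {}x {}z; have [dx Hx] := phi_d x; have [dz Hz] := phi_d z.
  rewrite dx dz => h1 h2.
  have E := @Y_inj z x (d x) ltac:(lia) ltac:(lia) (fun i hi => etrans (esym (Hz i ltac:(lia))) (etrans (h2 i hi) (Hx i hi))).
  have [[Pw _] [_ Pd]] := pth_spec z; have [_ [_ Pdx]] := pth_spec x.
  have := Pw (d x) ltac:(lia); rewrite E // Pdx -h1 Pd; exact.
move=> a; case: (child_split a) => [[h1 h2]|[h1 h2]]; first exact: key.
apply: adj_sym; exact: key.
Qed.

Lemma phi_inj x z : phi x = phi z -> x = z.
Proof.
move=> e; have [dx Hx] := phi_d x; have [dz Hz] := phi_d z.
have dd : d x = d z by rewrite -dx -dz e.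
have E := @Y_inj x z (d x) (leqnn _) ltac:(lia) (fun i hi => etrans (esym (Hx i hi)) (etrans (f_equal (fun w => pth w i) e) (Hz i ltac:(lia)))).
have [_ [_ Pd]] := pth_spec x; have [_ [_ Pdz]] := pth_spec z.
by rewrite -Pd E // dd Pdz.
Qed.

Lemma phi_surj y : exists x, phi x = y.
Proof.
have [n hy] : exists n, d y = n by eexists.
elim: n y hy => [|n IH] y hy.
- exists o; rewrite (d0 hy) /phi d_o //.
- have [[Pw Pb] [P0 Pd]] := pth_spec y.
  have [dp Hp] := pth_pref2 (x := y) (i := n) ltac:(lia).
  have [x ex] := IH _ dp.
  have [dx Hx] := phi_d x.
  have dxn : d x = n by rewrite -dx ex.
  have dd : d x = d (pth y n) by rewrite dxn dp.
  have [g1 g2 g3 g4 g5] := @sigG x (pth y n) dd.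
  have apy : adj (pth y n) y by rewrite -{2}Pd hy; apply: Pw; lia.
  have [z [axz ez]] := g3 _ apy.
  case: (child_split axz) => [[h1 h2]|[h1 h2]].
  + by exists z; rewrite (phi_child h1 h2) ex.
  + exfalso.
    have zp : z = par x.
      have [_ [_ Pdz]] := pth_spec z.
      by rewrite /par h1 /= h2 // Pdz.
    move: ez; rewrite zp g4; last lia.
    rewrite /par dp Hp; last lia.
    move=> e; have := pth_pref2 (x := y) (i := n.-1) ltac:(lia).
    rewrite e hy; case; lia.
Qed.

Lemma phi_ray i : phi (r1 i) = r2 i.
Proof.
have [di Hi] := pth_prefix (ray_NB i Hr1) r10.
have : forall j, j <= i -> Yf (r1 i) j = r2 j.
  elim=> [|j IH] hj /=; first by rewrite r20.
  rewrite IH; last lia.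
  rewrite !Hi; try lia.
  have dd : d (r1 j) = d (r2 j) by rewrite dr1 dr2.
  have [_ _ _ _ g5] := @sigG (r1 j) (r2 j) dd.
  exact: g5.
by rewrite /phi di => ->.
Qed.

Definition phinv y := epsilon (inhabits y) (fun x => phi x = y).
Lemma phinvK : cancel phinv phi.
Proof. move=> y; rewrite /phinv; exact: (epsilon_spec (inhabits y) _ (phi_surj y)). Qed.
Lemma phiK : cancel phi phinv.
Proof. move=> x; apply: phi_inj; by rewrite phinvK. Qed.

Lemma aut_ray : exists k : aut adj, forall i, afun k (r1 i) = r2 i.
Proof.
have Hadj : forall x y, adj (phi x) (phi y) <-> adj x y.
  by move=> x y; split; [exact: phi_adj_rev|exact: phi_adj].
exists (@Aut _ adj phi phinv phiK phinvK Hadj) => i /=; exact: phi_ray.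
Qed.
End Construct.
End Tree.


Import GRing.Theory Num.Theory.
Local Open Scope ring_scope.

Lemma aut_ext (X : Type) (adj : X -> X -> Prop) (g h : aut adj) :
  (forall x, afun g x = afun h x) -> g = h.
Proof.
case: g => f fi fK fiK fa; case: h => f' fi' fK' fiK' fa' /= E.
have ef : f = f' by apply: funext.
subst f'.
have efi : fi = fi'.
  apply: funext => x; apply: (can_inj fK); by rewrite fiK fiK'.
subst fi'.
have -> : fK = fK' by apply: Prop_irrelevance.
have -> : fiK = fiK' by apply: Prop_irrelevance.
by have -> : fa = fa' by apply: Prop_irrelevance.
Qed.

Section Line.
Variables (X : Type) (adj : X -> X -> Prop) (q : nat).
Hypothesis Htree : is_regular_tree adj q.
Variable (l : int -> X).
Hypothesis Hl : is_line adj l.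
Variable tau : aut adj.
Hypothesis Htau : forall n : int, afun tau (l n) = l (n + 1).

Lemma lineNB (a : int) n : NB adj (fun i => l (a + i%:Z)) n.
Proof.
split=> i hi.
- have -> : a + (i.+1)%:Z = a + i%:Z + 1 by lia.
  exact: (Hl _).1.
- have -> : a + (i.+2)%:Z = a + i%:Z + 2 by lia.
  exact: (Hl _).2.
Qed.

Lemma l_inj a b : l a = l b -> a = b.
Proof.
wlog : a b / a <= b.
  move=> H e; case: (lerP a b) => h; first exact: H.
  by apply/esym/H => //; lia.
move=> ab e; have := @NB_inj _ _ _ Htree _ `|b - a|%N 0 `|b - a|%N (lineNB a `|b - a|%N) (leq0n _) (leqnn _).
rewrite addr0 e; have -> : a + `|b - a|%N%:Z = b by lia.
move=> H; have := H erefl; lia.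
Qed.

Lemma dist_l (a : int) (n : nat) : dist adj (l a) (l (a + n%:Z)) = n.
Proof. have := dist_NB Htree (lineNB a n); by rewrite /= addr0. Qed.

Lemma dist_ol (M : int) : 0 <= M -> (dist adj (l 0) (l M))%:Z = M.
Proof.
move=> h; have := dist_l 0 `|M|%N; rewrite add0r.
have -> : `|M|%N%:Z = M by lia.
by move=> ->; lia.
Qed.

Lemma ray_p : is_ray adj (omega_plus l).
Proof.
move=> n; rewrite /omega_plus; split.
- have -> : (n.+1)%:Z = n%:Z + 1 by lia. exact: (Hl _).1.
- have -> : (n.+2)%:Z = n%:Z + 2 by lia. exact: (Hl _).2.
Qed.

Lemma ray_m : is_ray adj (omega_minus l).
Proof.
move=> n; rewrite /omega_minus; split.
- have e : - n%:Z = - (n.+1)%:Z + 1 by lia.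
  rewrite e; apply: (adj_sym Htree); exact: (Hl _).1.
- have e : - n%:Z = - (n.+2)%:Z + 2 by lia.
  rewrite e => H; apply: (Hl (- (n.+2)%:Z)).2; by rewrite H.
Qed.

Lemma iter_afun (g : aut adj) n x : afun (iter n (aut_mul g) (aut_id adj)) x = iter n (afun g) x.
Proof. by elim: n => //= n IH; rewrite IH. Qed.

Lemma iter_inv1 (g : aut adj) n x : iter n (ainv g) (iter n (afun g) x) = x.
Proof. elim: n => // n IH; by rewrite (iterSr n (ainv g)) iterS afunK. Qed.
Lemma iter_inv2 (g : aut adj) n x : iter n (afun g) (iter n (ainv g) x) = x.
Proof. elim: n => // n IH; by rewrite (iterSr n (afun g)) iterS ainvK. Qed.

Lemma pow_inv (g : aut adj) j x : afun (aut_pow g (- j)) (afun (aut_pow g j) x) = x.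
Proof.
case: j => [[|m]|m].
- by [].
- rewrite -NegzE /aut_pow iter_afun iter_afun; exact: (iter_inv1 g m.+1 x).
- rewrite NegzE opprK /aut_pow iter_afun iter_afun; exact: (iter_inv2 g m.+1 x).
Qed.

Lemma ainv_tau n : ainv tau (l n) = l (n - 1).
Proof. by rewrite -{1}(subrK 1 n) -Htau afunK. Qed.

Lemma tau_pow j n : afun (aut_pow tau j) (l n) = l (n + j).
Proof.
case: j => m /=.
- rewrite iter_afun; elim: m => [|m IH] /=; first by rewrite addr0.
  rewrite IH Htau; congr l; lia.
- rewrite iter_afun; elim: m => [|m IH] /=.
  + rewrite ainv_tau NegzE; congr l; lia.
  + rewrite IH ainv_tau !NegzE; congr l; lia.
Qed.


Let o := l 0.
Definition Bw (h : aut adj) (w : nat -> X) := horo adj o (afun h o) (afun h \o w).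

Lemma Bp_ev h : exists M0 : int, forall M : int, M0 <= M ->
  (dist adj o (afun h (l M)))%:Z = M + Bw h (omega_plus l).
Proof.
have [N0 H0] := horo_ev Htree o (afun h o) (is_ray_aut h ray_p).
exists N0%:Z => M hM.
have eM : M = `|M|%N%:Z by lia.
have := H0 `|M|%N ltac:(lia).
rewrite /Bw => ->; rewrite /= /omega_plus -eM (dist_aut Htree) dist_ol; last lia.
lia.
Qed.

Lemma dist_K (k : aut adj) z : afun k o = o -> dist adj o (afun k z) = dist adj o z.
Proof. by move=> e; rewrite -{1}e (dist_aut Htree). Qed.

Definition Pdec h j := exists k n, inK l k /\ inB l n /\
  aut_eq h (aut_mul k (aut_mul n (aut_pow tau j))).

Lemma P_unique h j : Pdec h j -> j = Bw h (omega_plus l).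
Proof.
move=> [k [n [Hk [[[a [b Hab]] [v Hv]] Heq]]]].
have Hab' : forall i : nat, afun n (l (i + a)%N%:Z) = l (i + b)%N%:Z by move=> i; exact: Hab i.
have ab : a = b.
  have [N1 H1] := horo_ev Htree o v ray_p.
  pose i := (N1 + a + b)%N.
  have e1 := H1 (i + a)%N ltac:(lia); have e2 := H1 (i + b)%N ltac:(lia).
  rewrite /omega_plus in e1 e2.
  have e3 : dist adj v (l (i + b)%N%:Z) = dist adj v (l (i + a)%N%:Z).
    by rewrite -(Hab' i) -{1}Hv (dist_aut Htree).
  have e4 := @dist_ol (i + a)%N%:Z ltac:(lia).
  have e5 := @dist_ol (i + b)%N%:Z ltac:(lia).
  rewrite /o in e1 e2; lia.
subst b.
have nfix : forall M : int, a%:Z <= M -> afun n (l M) = l M.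
  move=> M hM; have := Hab' `|M - a%:Z|%N.
  by have -> : (`|M - a%:Z| + a)%N%:Z = M by lia.
have [M0 HM0] := Bp_ev h.
pose M := `|M0|%N%:Z + a%:Z + `|j|%N%:Z.
have := HM0 M ltac:(lia).
rewrite Heq /= tau_pow nfix; last lia.
rewrite dist_K // dist_ol; last lia.
lia.
Qed.

Lemma P_exists h : Pdec h (Bw h (omega_plus l)).
Proof.
set j := Bw h (omega_plus l).
pose h' := aut_mul h (aut_pow tau (- j)).
have [M0 HM0] := Bp_ev h.
have dh' : forall M : int, M0 + j <= M -> (dist adj o (afun h' (l M)))%:Z = M.
  move=> M hM; rewrite /h' /= tau_pow HM0; [rewrite -/j; lia|lia].
have [rho [Hrho [rho0 [a [b Hab]]]]] := ray_exists Htree o (is_ray_aut h' ray_p).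
have ab : a = b.
  pose i := (`|M0|%N + `|j|%N + a + b)%N.
  have := dist_ray Htree (i + a)%N Hrho; rewrite rho0 Hab /= /omega_plus.
  move/(congr1 (fun n : nat => n%:Z)); rewrite dh'; lia.
subst b.
have rh : forall N : nat, (a <= N)%N -> rho N = afun h' (l N%:Z).
  move=> N hN; have := Hab (N - a)%N; by rewrite subnK.
have [k Hk] := aut_ray Htree ray_p Hrho erefl rho0.
exists k, (aut_mul (aut_inv k) h'); split; last split.
- by rewrite /inK /base_o; have := Hk 0%N; rewrite /omega_plus rho0.
- split.
  + exists a, a => i /=.
    have e := rh (i + a)%N ltac:(lia); rewrite /h' /= in e.
    by rewrite /omega_plus -e -(Hk (i + a)%N) afunK.
  + exists (l a%:Z) => /=.
    have e := rh a (leqnn _); rewrite /h' /= in e.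
    by rewrite -e -(Hk a) afunK.
- move=> x /=; rewrite ainvK; by rewrite /h' /= (pow_inv tau).
Qed.

Lemma Hiw_B h : Hiw l tau h = Bw h (omega_plus l).
Proof.
apply: P_unique; rewrite /Hiw.
exact: (epsilon_spec (inhabits 0) (Pdec h) (ex_intro _ _ (P_exists h))).
Qed.

Lemma B_cocycle (gam h : aut adj) (w : nat -> X) : is_ray adj w ->
  Bw h w = Bw (aut_mul (aut_inv gam) h) w + horo adj o (afun gam o) (afun h \o w).
Proof.
move=> Hw; rewrite /Bw.
have HW := is_ray_aut h Hw.
rewrite (horo_cocycle Htree o (afun gam o) (afun h o) HW) addrC; congr (_ + _).
have E := horo_aut Htree gam o (afun (aut_mul (aut_inv gam) h) o) (is_ray_aut (aut_inv gam) HW).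
have ef : afun gam \o (afun (aut_inv gam) \o (afun h \o w)) = afun h \o w.
  by apply: funext => n /=; rewrite ainvK.
rewrite ef /= ainvK in E; rewrite E; reflexivity.
Qed.

Lemma shift_p (g : aut adj) j x :
  horo adj o x (afun (aut_mul g (aut_pow tau j)) \o omega_plus l) = horo adj o x (afun g \o omega_plus l).
Proof.
apply: (horo_req Htree); [exact: is_ray_aut ray_p|exact: is_ray_aut ray_p|].
case: (lerP 0 j) => hj.
- exists 0%N, `|j|%N => n /=; rewrite tau_pow /omega_plus; congr (afun g (l _)); lia.
- exists `|j|%N, 0%N => n /=; rewrite tau_pow /omega_plus; congr (afun g (l _)); lia.
Qed.

Lemma shift_m (g : aut adj) j x :
  horo adj o x (afun (aut_mul g (aut_pow tau j)) \o omega_minus l) = horo adj o x (afun g \o omega_minus l).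
Proof.
apply: (horo_req Htree); [exact: is_ray_aut ray_m|exact: is_ray_aut ray_m|].
case: (lerP 0 j) => hj.
- exists `|j|%N, 0%N => n /=; rewrite tau_pow /omega_minus; congr (afun g (l _)); lia.
- exists 0%N, `|j|%N => n /=; rewrite tau_pow /omega_minus; congr (afun g (l _)); lia.
Qed.

Variable r : aut adj.
Hypotheses (HrK : inK l r)
  (Hrtau : forall j : int,
     aut_eq (aut_mul r (aut_mul (aut_pow tau j) (aut_inv r))) (aut_pow tau (- j))).

Lemma r_l n : afun r (l n) = l (- n).
Proof.
have HrK' : afun r o = o := HrK.
have Hro : ainv r o = o by rewrite -{1}HrK' afunK.
have := Hrtau n o; rewrite /= Hro /o !tau_pow; by rewrite !add0r.
Qed.

Lemma Hiw_r h : Hiw l tau (aut_mul h r) = Bw h (omega_minus l).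
Proof.
rewrite Hiw_B /Bw /=; have -> : afun r o = o by exact: HrK.
congr horo; apply: funext => n /=; by rewrite /omega_plus /omega_minus r_l.
Qed.
End Line.


Section Zsum.
Variable R : realType.

Definition psum (F : int -> R[i]) (n : nat) := \sum_(i < (n.*2).+1) F (i%:Z - n%:Z).

Lemma psum_step F n : F (- (n.+1)%:Z) = 0 -> F (n.+1)%:Z = 0 -> psum F n.+1 = psum F n.
Proof.
move=> h1 h2; rewrite /psum -!(big_mkord xpredT (fun i => F (i%:Z - _))) doubleS.
rewrite big_nat_recl // big_nat_recr //=.
have -> : F (0%N%:Z - (n.+1)%:Z) = 0 by rewrite -h1; congr F; lia.
have -> : F ((n.*2).+1.+1%:Z - (n.+1)%:Z) = 0 by rewrite -h2; congr F; lia.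
rewrite add0r addr0; apply: eq_bigr => i _; congr F; lia.
Qed.

Lemma psum_stable F N0 : (forall j, F j != 0 -> (`|j| <= N0)%N) ->
  forall n, (N0 <= n)%N -> psum F n = psum F N0.
Proof.
move=> H; elim=> [|n IH] hn; first by have -> : N0 = 0%N by lia.
case: (eqVneq N0 n.+1) => [->//|ne].
rewrite psum_step ?IH //; try lia.
- case: (eqVneq (F (- (n.+1)%:Z)) 0) => // /H; lia.
- case: (eqVneq (F (n.+1)%:Z) 0) => // /H; lia.
Qed.

Lemma zsum_fin (F : int -> R[i]) N0 : (forall j, F j != 0 -> (`|j| <= N0)%N) -> zsum F = psum F N0.
Proof.
move=> H.
have ex : exists c, exists N : nat, forall n : nat, (N <= n)%N ->
   \sum_(i < (n.*2).+1) F (i%:Z - n%:Z) = c.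
  by exists (psum F N0), N0 => n hn; exact: psum_stable.
have [N HN] := epsilon_spec (inhabits 0) _ ex.
rewrite /zsum; rewrite -(HN (N + N0)%N) ?leq_addr //.
apply: (psum_stable H); lia.
Qed.

Lemma zsum_scale (F : int -> R[i]) (c : R[i]) N0 : (forall j, F j != 0 -> (`|j| <= N0)%N) ->
  zsum (fun j => c * F j) = c * zsum F.
Proof.
move=> H; rewrite (zsum_fin H) (@zsum_fin _ N0).
- by rewrite /psum big_distrr.
- move=> j hj; apply: H; apply: contraNneq hj => ->; by rewrite mulr0.
Qed.

Lemma qpow_add (q : nat) (a b : R[i]) : qpow q (a + b) = qpow q a * qpow q b.
Proof.
case: a => a1 a2; case: b => b1 b2; rewrite /qpow /=.
set L := ln (q%:R : R).
rewrite !mulrDl expRD cosD sinD.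
apply/eqP; rewrite eq_complex /=; apply/andP; split; apply/eqP; ring.
Qed.
End Zsum.


Local Open Scope complex_scope.

Lemma list_bound (X : Type) (adj : X -> X -> Prop) (q : nat) (Htree : is_regular_tree adj q)
  (l : int -> X) (Hl : is_line adj l) (h : aut adj) (S : list X) :
  exists N0 : nat, forall j : int, List.In (afun h (l j)) S -> (`|j| <= N0)%N.
Proof.
elim: S => [|v S [N IH]]; first by exists 0%N.
case: (classic (exists j0, afun h (l j0) = v)) => [[j0 e0]|hno].
- exists (N + `|j0|)%N => j /= [e|hin].
  + have : j = j0.
      apply: (l_inj Htree Hl); apply: (can_inj (@afunK _ _ h)); by rewrite -e e0.
    lia.
  + have := IH j hin; lia.
- exists N => j /= [e|hin]; [exfalso; apply: hno; by exists j | exact: IH].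
Qed.

Theorem proposition3p6
  (R : realType) (X : Type) (adj : X -> X -> Prop) (q : nat)
  (hq : (2 <= q)%N) (Htree : is_regular_tree adj q)
  (l : int -> X) (Hl : is_line adj l)
  (tau : aut adj) (Htau : forall n : int, afun tau (l n) = l (n + 1))
  (r : aut adj) (HrK : inK l r) (Hr2 : aut_eq (aut_mul r r) (aut_id adj))
  (Hrtau : forall j : int,
     aut_eq (aut_mul r (aut_mul (aut_pow tau j) (aut_inv r))) (aut_pow tau (- j)))
  (s s' : R[i]) (f : aut adj -> R[i])
  (HfM : right_M_invariant l f) (Hflc : locally_constant f)
  (Hfcs : compact_support (base_o l) f)
  (gamma g : aut adj) :
  radon q l tau r s s' (fun h => f (aut_mul (aut_inv gamma) h)) g =
    qpow q ((2^-1 + 'i * s) *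
            (horo adj (base_o l) (afun gamma (base_o l)) (g_omega_plus l g))%:~R) *
    qpow q ((2^-1 - 'i * s'^*) *
            (horo adj (base_o l) (afun gamma (base_o l)) (g_omega_minus l g))%:~R) *
    radon q l tau r s s' f (aut_mul (aut_inv gamma) g).
Proof.
rewrite /radon.
pose h0 := aut_mul (aut_inv gamma) g.
pose F2 := fun j => f (aut_mul h0 (aut_pow tau j)) * dweight q l tau r s (- s'^*) (aut_mul h0 (aut_pow tau j)).
pose c := qpow q ((2^-1 + 'i * s) *
            (horo adj (base_o l) (afun gamma (base_o l)) (g_omega_plus l g))%:~R) *
    qpow q ((2^-1 - 'i * s'^*) *
            (horo adj (base_o l) (afun gamma (base_o l)) (g_omega_minus l g))%:~R).
have E : forall j, f (aut_mul (aut_inv gamma) (aut_mul g (aut_pow tau j))) *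
    dweight q l tau r s (- s'^*) (aut_mul g (aut_pow tau j)) = c * F2 j.
  move=> j.
  have eh : aut_mul h0 (aut_pow tau j) = aut_mul (aut_inv gamma) (aut_mul g (aut_pow tau j)).
    by apply: aut_ext.
  rewrite /F2 eh /dweight.
  rewrite (Hiw_B Htree Hl Htau (aut_mul g (aut_pow tau j))).
  rewrite (Hiw_r Htree Hl Htau HrK Hrtau (aut_mul g (aut_pow tau j))).
  rewrite (Hiw_B Htree Hl Htau (aut_mul (aut_inv gamma) (aut_mul g (aut_pow tau j)))).
  rewrite (Hiw_r Htree Hl Htau HrK Hrtau (aut_mul (aut_inv gamma) (aut_mul g (aut_pow tau j)))).
  rewrite (B_cocycle Htree l gamma (aut_mul g (aut_pow tau j)) (ray_p Hl)).
  rewrite (B_cocycle Htree l gamma (aut_mul g (aut_pow tau j)) (ray_m Htree Hl)).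
  rewrite (shift_p Htree Hl Htau) (shift_m Htree Hl Htau).
  rewrite !intrD !mulrDr !qpow_add.
  have -> : 2^-1 + 'i * - s'^* = 2^-1 - 'i * s'^* by rewrite mulrN.
  rewrite /c /g_omega_plus /g_omega_minus /base_o.
  ring.
have [S HS] := Hfcs.
have [N0 HN0] := list_bound Htree Hl h0 S.
transitivity (zsum (fun j => c * F2 j)).
  by congr zsum; apply: funext => j /=; rewrite E.
rewrite (@zsum_scale _ F2 c N0); first by [].
move=> j hj; apply: HN0.
have : f (aut_mul h0 (aut_pow tau j)) <> 0.
  by move=> e; move: hj; rewrite /F2 e mul0r eqxx.
move/HS; rewrite /= /base_o (tau_pow Htau) add0r; exact.
Qed.
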